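(* Let $m\ge 1$, $\alpha\in(0,1)$, and let $\mathbf{X}=(X_1,\dots,X_m)$ be a real random vector whose joint CDF $F_{\mathbf{X}}$ is continuous and strictly increasing, with continuous marginal CDFs $F_{X_1},\dots,F_{X_m}$ and copula $C_{\mathbf{X}}$, so that $F_{\mathbf{X}}(x_1,\dots,x_m)=C_{\mathbf{X}}(F_{X_1}(x_1),\dots,F_{X_m}(x_m))$. Let $q_{\max}$ be the value returned by the max-rank procedure, i.e. the smallest $q\in[0,1]$ such that $\mathbb{P}\big(\max_{1\le k\le m}\tilde R_k\le q\big)\ge 1-\alpha$, where $\tilde R_k=F_{X_k}(X_k)$ is the normalized rank of the $k$-th component. Then $q_{\max}$ solves the constrained problem $$\min q \quad\text{s.t.}\quad C_{\mathbf{X}}(q,\dots,q)\ge 1-\alpha,$$ i.e. $C_{\mathbf{X}}(q_{\max},\dots,q_{\max})\ge 1-\alpha$ and no smaller $q$ satisfies this constraint. Consequently the thresholds $x_{t,k}=F_{X_k}^{-1}(q_{\max})$, $k=1,\dots,m$, satisfy $\mathbb{P}(X_1\le x_{t,1},\dots,X_m\le x_{t,m})\ge 1-\alpha$ (family-wise error control at level $\alpha$), and among all thresholds with a common marginal quantile level they are optimal in the sense of maximal statistical power (decreasing the common level by any $\epsilon>0$ violates the error control).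
   Context: Setting: $m$ hypothesis tests are run in parallel; test $k$ has an empirical null distribution $\mathbf{s}_k=(s_{1,k},\dots,s_{n,k})$ of size $n$, collected in a matrix $\mathbf{S}\in\mathbb{R}^{n\times m}$, with column-wise rank matrix $\mathbf{R}=[r_{i,k}]$, where $r_{i,k}=|\{j\in[n]: s_{j,k}\le s_{i,k}\}|$ (ranks assumed distinct). The max-rank procedure: compute $\mathbf{r}_{\max}=(\max_k r_{1,k},\dots,\max_k r_{n,k})$, sort it ascending and take $r_{\max}$ as the entry at index $\lceil (n+1)(1-\alpha)\rceil$; then for each test $k$ use as corrected threshold (quantile) the $r_{\max}$-th smallest value of $\mathbf{s}_k$. Modeling each test statistic as a component $X_k$ of the random vector $\mathbf{X}$, normalized ranks $r/n$ correspond to values of the marginal CDF $F_{X_k}$, so the normalized selected rank $r_{\max}/n$ corresponds to the $(1-\alpha)$-quantile $q_{\max}$ of $\max_k F_{X_k}(X_k)$. A vector of thresholds $\mathbf{x}_t$ controls the family-wise error rate (probability of at least one false rejection) at level $\alpha$ iff $F_{\mathbf{X}}(\mathbf{x}_t)\ge 1-\alpha$; a smaller common quantile level means larger corrected significance levels and hence higher statistical power. *)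

(* Defs.v *)
From HB Require Import structures.
From mathcomp Require Import all_boot all_order all_algebra.
From mathcomp Require Import all_classical all_reals all_analysis.
Set Implicit Arguments. Unset Strict Implicit. Unset Printing Implicit Defensive.
Import Order.TTheory GRing.Theory Num.Theory.
Import numFieldNormedType.Exports.
Local Open Scope classical_set_scope.
Local Open Scope ring_scope.

Definition mcdf d (T : measurableType d) (R : realType) (P : probability T R)
  (X : {RV P >-> R}) (x : R) : R := fine (cdf X x).

Definition jcdf d (T : measurableType d) (R : realType) (P : probability T R)
  (m : nat) (X : 'I_m -> {RV P >-> R}) (x : 'rV[R]_m) : R :=
  fine (P [set t | forall k : 'I_m, X k t <= x ord0 k]).

Definition quantile (R : realType) (F : R -> R) (q : R) : R :=
  inf [set x | q <= F x].

Definition strictly_increasing_mv (R : realType) (m : nat) (F : 'rV[R]_m -> R) :=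
  forall x y : 'rV[R]_m, (forall k, x ord0 k <= y ord0 k) -> x != y -> F x < F y.

Definition in_unit_cube (R : realType) (m : nat) (u : 'rV[R]_m) :=
  forall k, 0 <= u ord0 k <= 1.

(* Standard definition of an m-dimensional copula C : [0,1]^m -> [0,1]
   (values outside [0,1]^m are irrelevant):
   grounded, uniform margins, and m-increasing (nonnegative C-volume of
   every box [a,b] in [0,1]^m). *)
Definition is_copula (R : realType) (m : nat) (C : 'rV[R]_m -> R) :=
  [/\ (forall u, in_unit_cube u -> 0 <= C u <= 1),
      (forall u, in_unit_cube u -> (exists k, u ord0 k = 0) -> C u = 0),
      (forall u k, in_unit_cube u -> (forall j, j != k -> u ord0 j = 1) ->
         C u = u ord0 k) &
      (forall a b : 'rV[R]_m, in_unit_cube a -> in_unit_cube b ->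
         (forall k, a ord0 k <= b ord0 k) ->
         0 <= \sum_(s : {ffun 'I_m -> bool})
                (-1) ^+ #|[set k | ~~ s k]| *
                C (\row_k (if s k then b ord0 k else a ord0 k)))].

Definition constv (R : realType) (m : nat) (q : R) : 'rV[R]_m := \row_(k < m) q.

Definition maxrank_prob d (T : measurableType d) (R : realType)
  (P : probability T R) (m : nat) (X : 'I_m -> {RV P >-> R}) (q : R) : \bar R :=
  P [set t | \big[Num.max/0]_(k < m) mcdf (X k) (X k t) <= q].

(* Main.v *)
Require Import Defs.
From HB Require Import structures.
From mathcomp Require Import all_boot all_order all_algebra.
From mathcomp Require Import all_classical all_reals all_analysis.
From mathcomp Require Import ring lra.
Import Order.TTheory GRing.Theory Num.Theory.
Import numFieldNormedType.Exports.
Local Open Scope classical_set_scope.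
Local Open Scope ring_scope.

Lemma quantile_key (R : realType) (F : R -> R) (q : R) :
  continuous F -> (forall a b, a < b -> F a < F b) ->
  (exists a, F a < q) -> (exists b, q < F b) ->
  F (quantile F q) = q /\ (forall y, (F y <= q) = (y <= quantile F q)).
Proof.
move=> Fc Fi [a Fa] [b Fb].
have Fle y z : y <= z -> F y <= F z.
  by rewrite le_eqVlt => /orP[/eqP->//|/Fi/ltW].
have Flt y z : F y < F z -> y < z.
  by move=> h; rewrite ltNge; apply/negP => /Fle; rewrite leNgt h.
have ab : a <= b by apply/ltW/Flt/(lt_trans Fa Fb).
have [c _ Fcq] : exists2 c, c \in `[a, b] & F c = q.
  apply: IVT => //; first exact: continuous_subspaceT.
  by rewrite ge_min (ltW Fa) /= le_max (ltW Fb) orbT.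
have qc : quantile F q = c.
  rewrite /quantile; apply/eqP; rewrite eq_le; apply/andP; split.
    apply: ge_inf; last by rewrite /= Fcq.
    by exists c => y /=; rewrite -Fcq => h; rewrite leNgt; apply/negP => /Fi; rewrite ltNge h.
  apply: lb_le_inf; first by exists c; rewrite /= Fcq.
  by move=> y /=; rewrite -Fcq => h; rewrite leNgt; apply/negP => /Fi; rewrite ltNge h.
rewrite qc Fcq; split => // y; apply/idP/idP.
  by rewrite -Fcq => h; rewrite leNgt; apply/negP => /Fi; rewrite ltNge h.
by rewrite -Fcq; apply: Fle.
Qed.
Section M.
Context d (T : measurableType d) (R : realType) (P : probability T R) (X : {RV P >-> R}).

Lemma mcdfE x : cdf X x = (mcdf X x)%:E.
Proof. by rewrite /mcdf fineK // fin_num_measure. Qed.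

Lemma mcdf_ge0 x : 0 <= mcdf X x.
Proof. by rewrite -lee_fin -mcdfE cdf_ge0. Qed.

Lemma mcdf_le1 x : mcdf X x <= 1.
Proof. by rewrite -lee_fin -mcdfE cdf_le1. Qed.

Lemma mcdf_nd x y : x <= y -> mcdf X x <= mcdf X y.
Proof. by move=> xy; rewrite -lee_fin -!mcdfE cdf_nondecreasing. Qed.

Lemma mcdf_low q : 0 < q -> exists a, mcdf X a < q.
Proof.
move=> q0; have /fine_cvgP[_ h] := cvg_cdfNy0 X.
have : \forall t \near -oo, (fine \o cdf X) t < q by apply: cvgr_lt h _ q0.
move=> /filter_ex [a Ha]; by exists a.
Qed.

Lemma mcdf_high q : q < 1 -> exists b, q < mcdf X b.
Proof.
move=> q1; have /fine_cvgP[_ h] := cvg_cdfy1 X.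
have : \forall t \near +oo, q < (fine \o cdf X) t by apply: cvgr_gt h _ q1.
move=> /filter_ex [a Ha]; by exists a.
Qed.

End M.
Lemma meas_forall d (T : measurableType d) (m : nat) (A : 'I_m -> set T) :
  (forall k, measurable (A k)) -> measurable [set t | forall k, A k t].
Proof.
move=> mA.
pose G n := if @insub _ (fun i => i < m)%N 'I_m n is Some k then A k else setT.
have -> : [set t | forall k, A k t] = \bigcap_n G n.
  apply/seteqP; split => t /=.
    by move=> h n _; rewrite /G; case: insub.
  by move=> h k; have := h (val k) I; rewrite /G valK.
apply: bigcapT_measurable => n; rewrite /G; case: insub => //.
Qed.

Lemma union_bound d (T : measurableType d) (R : realType) (P : probability T R)
  (m : nat) (A : 'I_m -> set T) (r : R) :
  (forall k, measurable (A k)) -> (forall k, P (~` A k) <= r%:E)%E ->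
  (P [set t | forall k, A k t] >= 1 - (r *+ m)%:E)%E.
Proof.
move=> mA hr.
pose G n := if @insub _ (fun i => i < m)%N 'I_m n is Some k then ~` A k else set0.
have mE := @meas_forall d T m A mA.
have sub : ~` [set t | forall k, A k t] `<=` \big[setU/set0]_(k < m) G k.
  move=> t /= /existsNP [k hk]; rewrite -bigcup_mkord.
  by exists (val k); [exact: ltn_ord | rewrite /G valK].

have mG k : `I_m k -> measurable (G k).
  by move=> _; rewrite /G; case: insub => // k'; apply/measurableC/mA.
have hs := @content_subadditive _ _ _ P _ G m mG (measurableC mE) sub.
have hs2 : (P (~` [set t | forall k, A k t]) <= (r *+ m)%:E)%E.
  apply: (le_trans hs); apply: (@le_trans _ _ (\sum_(k < m) r%:E)%E).
    by apply: lee_sum => k _; rewrite /G valK; apply: hr.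
  by rewrite sumr_const card_ord EFin_natmul.

have := probability_setC P (measurableC mE); rewrite setCK => ->.
rewrite -(fineK (fin_num_measure P _ (measurableC mE))) in hs2 *.
by rewrite lee_fin in hs2; rewrite -EFinB lee_fin lerB.
Qed.

Theorem proposition1 (d : measure_display) (T : measurableType d) (R : realType)
  (P : probability T R) (m : nat) (X : 'I_m -> {RV P >-> R})
  (C : 'rV[R]_m -> R) (alpha qmax : R) :
  (1 <= m)%N ->
  0 < alpha < 1 ->
  continuous (jcdf X) ->
  strictly_increasing_mv (jcdf X) ->
  (forall k, continuous (mcdf (X k))) ->
  is_copula C ->
  (forall x : 'rV[R]_m, jcdf X x = C (\row_k mcdf (X k) (x ord0 k))) ->
  (* qmax is the value returned by the max-rank procedure: the smallest
     q in [0,1] with P(max_k F_{X_k}(X_k) <= q) >= 1 - alpha *)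
  0 <= qmax <= 1 ->
  ((1 - alpha)%:E <= maxrank_prob X qmax)%E ->
  (forall q, 0 <= q <= 1 -> ((1 - alpha)%:E <= maxrank_prob X q)%E -> qmax <= q) ->
  [/\ 1 - alpha <= C (constv m qmax),
      (forall q, 0 <= q <= 1 -> q < qmax -> C (constv m q) < 1 - alpha),
      ((1 - alpha)%:E <=
         P [set t | forall k, (X k t <= quantile (mcdf (X k)) qmax)%R])%E &
      (forall eps, 0 < eps < qmax ->
         (P [set t | forall k, (X k t <= quantile (mcdf (X k)) (qmax - eps))%R]
           < (1 - alpha)%:E)%E)].
Proof.
move=> m1 /andP[a0 a1] jc jsi Fc [_ cgr _ _] jC /andP[qm0 qm1] hq hmin.
have k0 : 'I_m := Ordinal m1.
have Fi k a b : a < b -> mcdf (X k) a < mcdf (X k) b.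
  move=> ab; rewrite lt_neqAle mcdf_nd ?ltW // andbT; apply/negP => /eqP E.
  pose x : 'rV[R]_m := \row_j (if j == k then a else 0).
  pose y : 'rV[R]_m := \row_j (if j == k then b else 0).
  suff : jcdf X x < jcdf X y.
    have -> : jcdf X x = jcdf X y.
      rewrite !jC; congr C; apply/matrixP => i j; rewrite !mxE.
      by case: eqP => // ->.
    by rewrite ltxx.
  apply: jsi.
    by move=> j; rewrite !mxE; case: eqP => // _; exact: ltW.
  apply/negP => /eqP/matrixP/(_ ord0 k); rewrite !mxE eqxx => abE.
  by rewrite abE ltxx in ab.
have QK k q : 0 < q < 1 -> mcdf (X k) (quantile (mcdf (X k)) q) = q /\
    (forall y, (mcdf (X k) y <= q) = (y <= quantile (mcdf (X k)) q)).
  case/andP => q0 q1; apply: quantile_key => //; first exact: Fi.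
    exact: mcdf_low.
  exact: mcdf_high.
pose E q := [set t | forall k, (X k t <= quantile (mcdf (X k)) q)%R].
pose A q k := X k @^-1` `]-oo, quantile (mcdf (X k)) q].
have mA q k : measurable (A q k) by apply: measurable_funPTI.
have EA q : E q = [set t | forall k, A q k t].
  by apply/seteqP; split => t /= h k; have := h k; rewrite /A /= in_itv /= ?andbT.
have PA q k : 0 < q < 1 -> P (A q k) = q%:E.
  move=> hq01; have [h _] := QK k q hq01; rewrite -[in RHS]h -mcdfE; done.
have PE q : 0 < q < 1 -> P (E q) = (C (constv m q))%:E.
  move=> hq01.
  have : jcdf X (\row_k quantile (mcdf (X k)) q) = C (constv m q).
    by rewrite jC; congr C; apply/matrixP => i j; rewrite !mxE (QK j q hq01).1.
  rewrite /jcdf (_ : [set t | _] = E q); last first.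
    by apply/seteqP; split => t /= h k; have := h k; rewrite mxE.
  move=> <-; rewrite fineK //.
  by apply: fin_num_measure; rewrite EA; apply: meas_forall.
have MR q : 0 < q < 1 -> maxrank_prob X q = P (E q).
  move=> hq01; rewrite /maxrank_prob; congr (P _); apply/seteqP; split => t /=.
    move/bigmax_leP => [_ h] k; rewrite -(QK k q hq01).2; exact: h.
  move=> h; apply/bigmax_leP; split; first by case/andP: hq01 => /ltW.
  by move=> k _; rewrite (QK k q hq01).2.
have Fpos k x : 0 < mcdf (X k) x.
  apply: (le_lt_trans (@mcdf_ge0 _ _ _ _ (X k) (x - 1))); apply: Fi; by rewrite gtrBl ltr01.
have qpos : 0 < qmax.
  rewrite lt_neqAle qm0 andbT; apply/negP => /eqP q0; move: hq.
  rewrite -q0 /maxrank_prob.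
  have -> : [set t | \big[Num.max/0]_(k < m) mcdf (X k) (X k t) <= 0] = set0.
    apply/seteqP; split => t //= /bigmax_leP [_ /(_ k0 isT)].
    by rewrite leNgt Fpos.
  by rewrite measure0 lee_fin subr_le0 leNgt a1.
have qlt1 : qmax < 1.
  pose q1 := 1 - alpha / m%:R.
  have hm : 1 <= m%:R :> R by rewrite ler1n.
  have tm : alpha / m%:R * m%:R = alpha by rewrite divfK // pnatr_eq0 -lt0n.
  have t0 : 0 < alpha / m%:R by rewrite divr_gt0 // ltr0n.
  have q1b : 0 < q1 < 1 by apply/andP; split; rewrite /q1; nra.
  have : ((1 - alpha)%:E <= maxrank_prob X q1)%E.
    rewrite MR // EA.
    have := @union_bound d T R P m (A q1) (1 - q1) (mA q1).
    have hr : forall k, (P (~` A q1 k) <= (1 - q1)%:E)%E.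
      by move=> k; rewrite probability_setC // PA // EFinB.
    move=> /(_ hr); apply: le_trans.
    rewrite -EFinB lee_fin -mulr_natr /q1.
    have -> : 1 - (1 - alpha / m%:R) = alpha / m%:R by ring.
    rewrite tm.
    done.
  move/(hmin q1 _); case/andP: q1b => q10 q11.
  by move=> /(_ _)/le_lt_trans; apply => //; rewrite !ltW.
have claim2 q : 0 <= q <= 1 -> q < qmax -> C (constv m q) < 1 - alpha.
  case/andP => q0 q1 qq.
  have [->|qn0] := eqVneq q 0.
    rewrite cgr ?subr_gt0 //.
      by move=> k; rewrite mxE lexx ler01.
    by exists k0; rewrite mxE.
  have q01 : 0 < q < 1.
    by rewrite lt_neqAle eq_sym qn0 q0 /= (lt_trans qq qlt1).
  rewrite ltNge; apply/negP => h.
  have := hmin q _ _; rewrite MR // PE // lee_fin => /(_ _ h).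
  by rewrite q0 q1 => /(_ isT); rewrite leNgt qq.
have qm01 : 0 < qmax < 1 by rewrite qpos qlt1.
have claim1 : 1 - alpha <= C (constv m qmax).
  by move: hq; rewrite MR // PE // lee_fin.
split => //.
  by rewrite -/(E qmax) PE // lee_fin.
move=> eps /andP[e0 eq].
have qe : 0 < qmax - eps < 1.
  apply/andP; split; first by rewrite subr_gt0.
  by apply: le_lt_trans qlt1; rewrite gerBl ltW.
rewrite -/(E (qmax - eps)) PE // lte_fin; apply: claim2.
  by case/andP: qe => /ltW -> /ltW ->.
by rewrite gtrBl.
Qed.
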